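(* Let $K\subseteq L$ be differential fields and $r\in\mathbb{N}$. Then $K$ is $r$-differentially closed in $L$ if and only if there is no differential subfield $E$ of $L$ with $K\subsetneq E$ and $\operatorname{trdeg}(E|K)\le r$.
   Context: Differential fields have characteristic $0$. $K$ is $r$-differentially closed in $L$ if for every nonzero differential polynomial $P\in K\{Y\}$ of order $\le r$, every zero of $P$ in $L$ lies in $K$. $\operatorname{trdeg}$ denotes transcendence degree of field extensions. *)

(* Defs.v *)
From HB Require Import structures.
From mathcomp Require Import all_boot all_order all_algebra.
From mathcomp Require Import mpoly.
Set Implicit Arguments. Unset Strict Implicit. Unset Printing Implicit Defensive.
Import GRing.Theory.
Local Open Scope ring_scope.

Section Diff.
Variable L : fieldType.

Definition derivation (d : L -> L) : Prop :=
  (forall x y, d (x + y) = d x + d y) /\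
  (forall x y, d (x * y) = d x * y + x * d y).

Definition diff_subfield (d : L -> L) (S : pred L) : Prop :=
  [/\ 1 \in S,
      (forall x y, x \in S -> y \in S -> x - y \in S),
      (forall x y, x \in S -> y \in S -> x * y \in S),
      (forall x, x \in S -> x^-1 \in S) &
      (forall x, x \in S -> d x \in S)].

Definition coeffs_in (K : pred L) n (p : {mpoly L[n]}) : Prop :=
  forall m, p@_m \in K.

Definition alg_indep (K : pred L) (s : seq L) : Prop :=
  forall p : {mpoly L[size s]}, coeffs_in K p ->
    p.@[fun i : 'I_(size s) => s`_i] = 0 -> p = 0.

Definition trdeg_le (K E : pred L) (r : nat) : Prop :=
  forall s : seq L, all (mem E) s -> alg_indep K s -> (size s <= r)%N.

(* K is r-differentially closed in L: for every nonzero differential polynomial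
   P in K{Y} of order <= r (i.e. a nonzero polynomial over K in the r+1
   variables Y, Y', ..., Y^(r)), every zero a of P in L lies in K. *)
Definition r_diff_closed (d : L -> L) (K : pred L) (r : nat) : Prop :=
  forall p : {mpoly L[r.+1]}, coeffs_in K p -> p != 0 ->
    forall a : L, p.@[fun i : 'I_r.+1 => iter i d a] = 0 -> a \in K.

End Diff.

(* Main.v *)
Require Import Defs.
From HB Require Import structures.
From mathcomp Require Import all_boot all_order all_algebra.
From mathcomp Require Import mpoly.
From Stdlib Require Import Classical ClassicalEpsilon.
From mathcomp Require Import ring zify.
Set Implicit Arguments. Unset Strict Implicit. Unset Printing Implicit Defensive.
Import GRing.Theory.
Local Open Scope ring_scope.

Section Deriv.
Variables (L : fieldType) (d : L -> L).
Hypothesis hd : derivation d.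

Lemma dD x y : d (x + y) = d x + d y. Proof. by case: hd. Qed.
Lemma dM x y : d (x * y) = d x * y + x * d y. Proof. by case: hd. Qed.
Lemma d0 : d 0 = 0.
Proof. by have := dD 0 0; rewrite addr0 -{1}[d 0]addr0 => /addrI. Qed.
Lemma d1 : d 1 = 0.
Proof.
by have := dM 1 1; rewrite !mul1r mulr1 -{1}[d 1]addr0 => /addrI.
Qed.
Lemma dN x : d (- x) = - d x.
Proof. by apply/eqP; rewrite -addr_eq0 -dD addNr d0. Qed.
Lemma dB x y : d (x - y) = d x - d y.
Proof. by rewrite dD dN. Qed.
Lemma d_sum (I : Type) (r : seq I) (P : pred I) (F : I -> L) :
  d (\sum_(i <- r | P i) F i) = \sum_(i <- r | P i) d (F i).
Proof.
elim: r => [|x r IH]; first by rewrite !big_nil d0.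
by rewrite !big_cons; case: (P x); rewrite ?dD IH.
Qed.
Lemma dX x k : d (x ^+ k) = k%:R * x ^+ k.-1 * d x.
Proof.
elim: k => [|k IH]; first by rewrite expr0 d1 !mul0r.
rewrite exprS dM IH; case: k IH => [|k] IH /=.
  by rewrite expr0 mulr1 !mul0r mulr0 addr0 !mul1r.
rewrite !exprS -[(k.+2)%:R]natr1 -[(k.+1)%:R]natr1; ring.
Qed.
Lemma dV x : x != 0 -> d (x^-1) = - d x / x ^+ 2.
Proof.
move=> x0; have := dM x x^-1; rewrite mulfV // d1 => /esym /eqP.
rewrite addr_eq0 => /eqP h.
have h' : x * d x^-1 = - (d x / x) by rewrite h opprK.
apply: (mulfI x0); rewrite h'; field; exact: x0.
Qed.
Lemma d_prod n (F : 'I_n -> L) :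
  d (\prod_(i < n) F i) = \sum_(i < n) d (F i) * \prod_(j < n | j != i) F j.
Proof.
elim: n F => [|n IH] F; first by rewrite big_ord0 d1 big_ord0.
rewrite big_ord_recr dM IH big_ord_recr /= mulr_suml; congr (_ + _).
  apply: eq_bigr => i _; rewrite -mulrA; congr (_ * _).
  rewrite [RHS](bigD1 ord_max) /=; last by rewrite -val_eqE /= neq_ltn ltn_ord orbT.
  rewrite mulrC; congr (_ * _).
  rewrite [RHS]big_mkcond big_ord_recr /= eqxx andbF mulr1 [LHS]big_mkcond.
  apply: eq_bigr => j _.
  have -> : (widen_ord (leqnSn n) j != ord_max) by rewrite -val_eqE /= neq_ltn ltn_ord.
  by rewrite andbT -!val_eqE.
rewrite mulrC; congr (_ * _).
rewrite [RHS]big_mkcond big_ord_recr /= eqxx mulr1.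
apply: eq_bigr => j _; rewrite ifT //.
by rewrite -val_eqE /= neq_ltn ltn_ord.
Qed.
End Deriv.

Section Chain.
Variables (L : fieldType) (d : L -> L).
Hypothesis hd : derivation d.

Definition dcoef n (p : {mpoly L[n]}) : {mpoly L[n]} :=
  \sum_(m <- msupp p) d (p@_m) *: 'X_[m].

Lemma d_monom n (m : 'X_{1..n}) (x : 'I_n -> L) :
  d (\prod_(i < n) x i ^+ m i) =
  \sum_(i < n) ((m i)%:R * \prod_(j < n) x j ^+ (m - U_(i))%MM j) * d (x i).
Proof.
rewrite (d_prod hd); apply: eq_bigr => i _.
rewrite (dX hd) [in RHS](bigD1 i) //=.
rewrite mnmBE mnm1E eqxx subn1.
rewrite [in RHS](eq_bigr (fun j => x j ^+ m j)); first by ring.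
by move=> j ji; rewrite mnmBE mnm1E eq_sym (negbTE ji) subn0.
Qed.

Lemma deriv_meval n (p : {mpoly L[n]}) (x : 'I_n -> L) :
  d (p.@[x]) = (dcoef p).@[x] + \sum_(i < n) (p^`M(i)).@[x] * d (x i).
Proof.
rewrite {1}(mpolyE p) raddf_sum /= (d_sum hd) /dcoef raddf_sum /=.
have -> : \sum_(i < n) (p^`M(i)).@[x] * d (x i) =
   \sum_(m <- msupp p) \sum_(i < n) p@_m * (((m i)%:R * \prod_(j < n) x j ^+ (m - U_(i))%MM j) * d (x i)).
  rewrite exchange_big /=; apply: eq_bigr => i _.
  rewrite {1}(mpolyE p).
  rewrite (big_morph _ (@mderivD _ _ i) (@mderiv0 _ _ i)) raddf_sum /= mulr_suml; apply: eq_bigr => m _.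
  by rewrite mderivZ mevalZ mderivX mevalZ mevalX -!mulrA.
rewrite -big_split /=; apply: eq_bigr => m _.
by rewrite !mevalZ mevalX (dM hd) (d_monom m x) mulr_sumr.
Qed.

Lemma dcoef_coef n (p : {mpoly L[n]}) m : (dcoef p)@_m = d (p@_m).
Proof.
rewrite /dcoef raddf_sum /=.
case: (boolP (m \in msupp p)) => hm.
  rewrite (bigD1_seq m) //= ?msupp_uniq // mcoeffZ mcoeffX eqxx mulr1 big1 ?addr0 //.
  by move=> m' hm'; rewrite mcoeffZ mcoeffX (negbTE hm') mulr0.
rewrite big_seq big1; last first.
  move=> m' hm'; rewrite mcoeffZ mcoeffX; case: eqP => [e|]; last by rewrite mulr0.
  by move: hm; rewrite -e hm'.
by move: hm; rewrite mcoeff_msupp negbK => /eqP ->; rewrite (d0 hd).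
Qed.
End Chain.

Section Remap.
Variables (R : ringType) (n n' : nat) (phi : 'X_{1..n} -> 'X_{1..n'}).

Definition remap (p : {mpoly R[n]}) : {mpoly R[n']} :=
  \sum_(m <- msupp p) p@_m *: 'X_[phi m].

Lemma remap_coefE p m' : (remap p)@_m' = \sum_(m <- msupp p | phi m == m') p@_m.
Proof.
rewrite /remap raddf_sum /= [RHS]big_mkcond /=; apply: eq_bigr => m _.
by rewrite mcoeffZ mcoeffX; case: eqP; rewrite ?mulr1 ?mulr0.
Qed.

Lemma remap_coef p m : {in msupp p &, injective phi} -> m \in msupp p ->
  (remap p)@_(phi m) = p@_m.
Proof.
move=> inj hm; rewrite remap_coefE big_seq_cond big_mkcond (bigD1_seq m) ?msupp_uniq //=.
rewrite hm eqxx big1 ?addr0 // => m' ne; case: ifP => // /andP [hm' /eqP e].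
by move: ne; rewrite (inj _ _ hm' hm e) eqxx.
Qed.

Lemma remap_supp p m' : m' \in msupp (remap p) -> exists2 m, m \in msupp p & m' = phi m.
Proof.
rewrite mcoeff_msupp remap_coefE => h.
case: (boolP (has (fun m => phi m == m') (msupp p))) => [/hasP [m hm /eqP e]|/hasPn hn].
  by exists m.
rewrite big_seq_cond big1 ?eqxx // in h.
by move=> m /andP [hm e]; move: (hn m hm); rewrite e.
Qed.

Lemma remap_ne0 p : {in msupp p &, injective phi} -> p != 0 -> remap p != 0.
Proof.
move=> inj; rewrite -msupp_eq0; case e: (msupp p) => [|m s] // _.
have hm : m \in msupp p by rewrite e mem_head.
apply/eqP => h; have := remap_coef inj hm; rewrite h mcoeff0 => e0.
by move: hm; rewrite mcoeff_msupp -e0 eqxx.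
Qed.

Lemma remap_eval p (x : 'I_n -> R) (y : 'I_n' -> R) :
  (forall m, m \in msupp p -> ('X_[phi m]).@[y] = ('X_[m]).@[x]) ->
  (remap p).@[y] = p.@[x].
Proof.
move=> h; rewrite {2}(mpolyE p) /remap !raddf_sum /=.
by apply: eq_big_seq => m hm; rewrite !mevalZ h.
Qed.

Lemma remap_coef_in (S : pred R) p : 0 \in S ->
  (forall x y, x \in S -> y \in S -> x + y \in S) ->
  (forall m, p@_m \in S) -> forall m, (remap p)@_m \in S.
Proof.
move=> S0 SD hp m; rewrite remap_coefE.
by elim/big_ind: _ => // x y; apply: SD.
Qed.

Lemma remap_homog p D : (forall m, m \in msupp p -> mdeg (phi m) = D) ->
  remap p \is D.-homog.
Proof.
move=> h; apply/dhomogP => m' /remap_supp [m hm ->]; exact: h.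
Qed.
End Remap.

Section MonMaps.
Variable n : nat.

Definition consm (t : nat) (m : 'X_{1..n}) : 'X_{1..n.+1} :=
  [multinom (if unlift ord0 i is Some j then m j else t) | i < n.+1].
Definition tailm (m : 'X_{1..n.+1}) : 'X_{1..n} :=
  [multinom m (lift ord0 i) | i < n].
Definition dropl (m : 'X_{1..n.+1}) : 'X_{1..n} :=
  [multinom m (widen_ord (leqnSn n) i) | i < n].

Lemma consm0 t m : consm t m ord0 = t.
Proof. by rewrite mnmE unlift_none. Qed.
Lemma consmS t m j : consm t m (lift ord0 j) = m j.
Proof. by rewrite mnmE liftK. Qed.
Lemma tailmE m j : tailm m j = m (lift ord0 j).
Proof. by rewrite mnmE. Qed.
Lemma droplE m j : dropl m j = m (widen_ord (leqnSn n) j).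
Proof. by rewrite mnmE. Qed.

Lemma mdeg_consm t m : mdeg (consm t m) = (t + mdeg m)%N.
Proof.
rewrite !mdegE big_ord_recl consm0; congr (_ + _)%N.
by apply: eq_bigr => j _; rewrite consmS.
Qed.

Lemma mdeg_tailm (m : 'X_{1..n.+1}) : mdeg m = (m ord0 + mdeg (tailm m))%N.
Proof.
rewrite !mdegE big_ord_recl; congr (_ + _)%N.
by apply: eq_bigr => j _; rewrite tailmE.
Qed.

Lemma consm_inj t1 t2 m1 m2 : consm t1 m1 = consm t2 m2 -> m1 = m2.
Proof.
move=> e; apply/mnmP => j.
by rewrite -(consmS t1 m1 j) -(consmS t2 m2 j) e.
Qed.

Lemma tailm_inj_deg (m1 m2 : 'X_{1..n.+1}) : mdeg m1 = mdeg m2 -> tailm m1 = tailm m2 -> m1 = m2.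
Proof.
rewrite (mdeg_tailm m1) (mdeg_tailm m2) => ed et.
rewrite et in ed; move/addIn: ed => e0.
apply/mnmP => i; case: (unliftP ord0 i) => [j ->|->] //.
by rewrite -!tailmE et.
Qed.

Lemma dropl_inj (m1 m2 : 'X_{1..n.+1}) : m1 ord_max = 0%N -> m2 ord_max = 0%N ->
  dropl m1 = dropl m2 -> m1 = m2.
Proof.
move=> h1 h2 e; apply/mnmP => i.
case: (unliftP ord_max i) => [j ->|->]; last by rewrite h1 h2.
have -> : lift ord_max j = widen_ord (leqnSn n) j by apply/val_inj; rewrite /= /bump leqNgt ltn_ord.
by rewrite -!droplE e.
Qed.

Variable R : comRingType.

Lemma eval_consm t m (y : 'I_n.+1 -> R) :
  ('X_[consm t m]).@[y] = y ord0 ^+ t * ('X_[m]).@[fun j => y (lift ord0 j)].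
Proof.
rewrite !mevalX big_ord_recl consm0; congr (_ * _).
by apply: eq_bigr => j _; rewrite consmS.
Qed.

Lemma eval_tailm (m : 'X_{1..n.+1}) (y : 'I_n.+1 -> R) : y ord0 = 1 ->
  ('X_[tailm m]).@[fun j => y (lift ord0 j)] = ('X_[m]).@[y].
Proof.
move=> y0; rewrite !mevalX [RHS]big_ord_recl y0 expr1n mul1r.
by apply: eq_bigr => j _; rewrite tailmE.
Qed.

Lemma eval_dropl (m : 'X_{1..n.+1}) (y : 'I_n.+1 -> R) : m ord_max = 0%N ->
  ('X_[dropl m]).@[fun j => y (widen_ord (leqnSn n) j)] = ('X_[m]).@[y].
Proof.
move=> h; rewrite !mevalX [RHS]big_ord_recr /= h expr0 mulr1.
by apply: eq_bigr => j _; rewrite droplE.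
Qed.
End MonMaps.

Section Binom.
Local Open Scope nat_scope.

Lemma binF1 N k : k.+1 * 'C(N + k.+1, k.+1) = (N + k.+1) * 'C(N + k, k).
Proof. by rewrite -mul_bin_diag addnS. Qed.

Lemma binF4 c N j : 0 < c -> 'C(c * N + j, j) <= c ^ j * 'C(N + j, j).
Proof.
move=> c0; elim: j => [|j IH]; first by rewrite !bin0 expn0.
have h1 := binF1 (c * N) j; have h2 := binF1 N j.
rewrite -(leq_pmul2l (ltn0Sn j)) h1 expnS.
move: IH; set A := 'C(_, _); set B := 'C(_, _); set P := c ^ j => IH.
set Y := 'C(_, _) in h2 *.
have -> : j.+1 * (c * P * Y) = c * P * (j.+1 * Y) by rewrite mulnCA.
rewrite h2.
have : c * N + j.+1 <= c * (N + j.+1) by nia.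
move=> h; apply: (leq_trans (leq_mul h IH)).
by rewrite -!mulnA; rewrite (mulnCA (N + j.+1)) (mulnCA _ P); rewrite mulnC -!mulnA.
Qed.

Lemma binF5 N k e : e <= N ->
  'C(N + k.+1, k.+1) <= 'C(N - e + k.+1, k.+1) + e * 'C(N + k, k).
Proof.
elim: e => [|e IH] he; first by rewrite subn0 mul0n addn0.
have {IH} IH := IH (ltnW he).
apply: (leq_trans IH); rewrite mulSn addnA leq_add2r.
have -> : N - e = (N - e.+1).+1 by lia.
rewrite addSn binS leq_add2l.
by apply: leq_bin2l; lia.
Qed.

Lemma bin_ineq j M c e D : 0 < c -> j < M -> D = (j.+1 * e * c ^ j + e)%N ->
  'C(c * D + j.+1, j.+1) < 'C(D + M, M) + 'C(c * D - e + j.+1, j.+1).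
Proof.
move=> c0 jM hD.
have eD : e <= c * D by rewrite hD; nia.
apply: (leq_ltn_trans (binF5 j eD)); rewrite addnC ltn_add2r.
have h4 := binF4 D j c0.
apply: (leq_ltn_trans (leq_mul (leqnn e) h4)).
have hM : 'C(D + j.+1, j.+1) <= 'C(D + M, M).
  rewrite -(bin_sub (leq_addl _ _)) -[in X in _ <= X](bin_sub (leq_addl D M)).
  rewrite !addnK; apply: leq_bin2l; lia.
apply: (leq_trans _ hM).
rewrite -(ltn_pmul2l (ltn0Sn j)) binF1.
have hpos : 0 < 'C(D + j, j) by rewrite bin_gt0 leq_addl.
rewrite mulnA mulnA; rewrite ltn_pmul2r //.
rewrite hD; nia.
Qed.
End Binom.

Lemma comp_homog (F : comRingType) n k (P : {mpoly F[n]}) (lq : n.-tuple {mpoly F[k]}) D c :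
  P \is D.-homog -> (forall i, tnth lq i \is c.-homog) -> P \mPo lq \is (c * D)%N.-homog.
Proof.
move=> /dhomogP hP hq; rewrite comp_mpolyE big_seq; apply/rpred_sum => m hm; apply/rpredZ.
have h : forall r : seq 'I_n,
    \prod_(i <- r) tnth lq i ^+ m i \is (c * \sum_(i <- r) m i)%N.-homog.
  elim => [|i r IH]; first by rewrite !big_nil muln0; exact: dhomog1.
  by rewrite !big_cons mulnDr; apply/dhomogM => //; exact: dhomogMn (hq i).
by move: (h (index_enum _)); rewrite -mdegE (hP m hm).
Qed.

Section PsiMap.
Variables (F : fieldType) (k M d1 d2 d3 : nat) (q : {mpoly F[k.+1]})
  (GH : (M.+1).-tuple {mpoly F[k.+1]}).

Definition psi_fun (x : (dhomog M.+1 F d1 * dhomog k.+1 F d2)%type) : dhomog k.+1 F d3 :=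
  DHomog (pihomogP mdeg d3 (((x.1 : {mpoly F[M.+1]}) \mPo GH) - q * (x.2 : {mpoly F[k.+1]}))).

Lemma psi_fun_linear : linear psi_fun.
Proof.
move=> a x y; apply/val_inj => /=.
set X1 := mpoly_of_dhomog x.1; set X2 := mpoly_of_dhomog x.2; set Y1 := mpoly_of_dhomog y.1; set Y2 := mpoly_of_dhomog y.2.
have -> : (a *: X1 + Y1) \mPo GH - q * (a *: X2 + Y2) =
   a *: (X1 \mPo GH - q * X2) + (Y1 \mPo GH - q * Y2).
  by rewrite linearP /= mulrDr scalerBr -scalerAr opprD addrACA.
by rewrite linearP.
Qed.

HB.instance Definition _ := GRing.isLinear.Build F _ _ _ psi_fun psi_fun_linear.
End PsiMap.

Lemma counting (F : fieldType) j M (q : {mpoly F[j.+2]}) e c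
    (GH : (M.+1).-tuple {mpoly F[j.+2]}) :
  q != 0 -> q \is e.-homog -> (forall i, tnth GH i \is c.-homog) -> (0 < c)%N ->
  (j < M)%N ->
  exists D, exists P : {mpoly F[M.+1]}, exists R : {mpoly F[j.+2]},
    [/\ P != 0, P \is D.-homog & P \mPo GH = q * R].
Proof.
move=> q0 qh GHh c0 jM.
set D := (j.+1 * e * c ^ j + e)%N.
have hineq := @bin_ineq j M c e D c0 jM (erefl _).
have eD : (e <= c * D)%N by rewrite /D; nia.
pose f := linfun (@psi_fun F j.+1 M D (c * D - e)%N (c * D)%N q GH : {linear _ -> _}).
have hdim := limg_ker_dim f fullv.
rewrite capfv in hdim.
have himg : (\dim (f @: fullv) <= 'C(c * D + j.+1, j.+1))%N.
  apply: (leq_trans (dimvS (subvf _))); rewrite dimvf /=.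
  have -> : dim (dhomog j.+2 F (c * D)) = 'C(c * D + j.+1, c * D) := erefl.
  by rewrite -(bin_sub (leq_addl _ _)) addnK.
have hdom : \dim (fullv : {vspace (dhomog M.+1 F D * dhomog j.+2 F (c * D - e))%type})
    = ('C(D + M, M) + 'C(c * D - e + j.+1, j.+1))%N.
  rewrite dimvf.
  have -> : dim (dhomog M.+1 F D * dhomog j.+2 F (c * D - e))%type =
     ('C(D + M, D) + 'C(c * D - e + j.+1, c * D - e))%N := erefl.
  by rewrite -(bin_sub (leq_addl D M)) -(bin_sub (leq_addl _ j.+1)) !addnK.
have hker : lker f != 0%VS.
  rewrite -dimv_eq0 -lt0n; move: hdim; rewrite hdom => hdim.
  move: hineq himg; rewrite -hdim; lia.
set x := vpick (lker f).
have x0 : x != 0 by rewrite vpick0.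
have xk : f x == 0 by rewrite -memv_ker memv_pick.
move: xk; rewrite lfunE /= => /eqP /(congr1 val) /= hx.
have hh : (mpoly_of_dhomog x.1) \mPo GH - q * (mpoly_of_dhomog x.2) \is (c * D)%N.-homog.
  apply: rpredB; first exact: comp_homog (dhomog_is_dhomog x.1) GHh.
  have := dhomogM qh (dhomog_is_dhomog x.2); rewrite subnKC //.
rewrite pihomog_dE // in hx; move/eqP: hx; rewrite subr_eq0 => /eqP hx.
exists D, (mpoly_of_dhomog x.1), (mpoly_of_dhomog x.2); split => //.
  apply/eqP => P0; move: hx; rewrite P0 raddf0 => /esym/eqP; rewrite mulf_eq0 (negbTE q0) /= => /eqP X2.
  clear hh; move: x0; case: x P0 X2 => [y1 y2] /= P0 X2.
  have -> : y1 = 0 by apply/val_inj.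
  have -> : y2 = 0 by apply/val_inj.
  by rewrite eqxx.
exact: dhomog_is_dhomog.
Qed.

Definition Kp (L : fieldType) (K : pred L) (H : GRing.divring_closed K) : {pred L} := K.

Section KT.
Variables (L : fieldType) (K : pred L) (H : GRing.divring_closed K).
HB.instance Definition _ := GRing.isDivringClosed.Build L (Kp H) H.
Inductive KT := mkKT x & x \in Kp H.
Definition vKT u := let: mkKT x _ := u in x.
HB.instance Definition _ := [isSub for vKT].
HB.instance Definition _ := [Choice of KT by <:].
HB.instance Definition _ := [SubChoice_isSubComUnitRing of KT by <:].
HB.instance Definition _ := [SubComUnitRing_isSubIntegralDomain of KT by <:].
HB.instance Definition _ := [SubIntegralDomain_isSubField of KT by <:].
End KT.

Section Pull.
Variables (L : fieldType) (K : pred L) (H : GRing.divring_closed K).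
Local Notation KF := (KT H).

Definition pullK n (p : {mpoly L[n]}) : {mpoly KF[n]} :=
  \sum_(m <- msupp p) (insubd (0 : KF) (p@_m)) *: 'X_[m].

Lemma pullKK n (p : {mpoly L[n]}) : (forall m, p@_m \in K) ->
  map_mpoly val (pullK p) = p.
Proof.
move=> hp; rewrite /pullK raddf_sum /= [RHS]mpolyE; apply: eq_bigr => m _.
rewrite (map_mpolyZ (val : {rmorphism KF -> L})) map_mpolyX.
by congr (_ *: _); exact: (insubdK (0 : KF) (hp m)).
Qed.

Lemma map_val_coef n (p : {mpoly KF[n]}) m : (map_mpoly val p)@_m \in K.
Proof. by rewrite mcoeff_map_mpoly; exact: valP. Qed.

Lemma map_val_eq0 n (p : {mpoly KF[n]}) : (map_mpoly val p == 0) = (p == 0).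
Proof.
apply/eqP/eqP => [h|->]; last by rewrite raddf0.
apply/mpolyP => m; apply/val_inj; move/mpolyP: h => /(_ m).
by rewrite mcoeff_map_mpoly mcoeff0 => ->; rewrite raddf0.
Qed.

Lemma map_val_homog n (p : {mpoly KF[n]}) D :
  map_mpoly val p \is D.-homog -> p \is D.-homog.
Proof.
move=> /dhomogP h; apply/dhomogP => m hm; apply: h.
by rewrite mcoeff_msupp mcoeff_map_mpoly raddf_eq0 -?mcoeff_msupp //; exact: val_inj.
Qed.
End Pull.

Lemma msize_mderiv_lt (R : ringType) n (p : {mpoly R[n]}) i :
  p^`M(i) != 0 -> (msize p^`M(i) < msize p)%N.
Proof.
move=> h; have p0 : p != 0 by apply: contraNneq h => ->; rewrite mderiv0.
have hp : (0 < msize p)%N by rewrite lt0n; move: p0; rewrite -(@mmeasure_poly_eq0 _ _ mdeg).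
rewrite [X in (X < _)%N]msizeE big_seq.
elim/big_ind: _ => //; first by move=> x y; rewrite gtn_max => -> ->.
move=> m hm; move: hm; rewrite mcoeff_msupp mcoeff_deriv.
case: (boolP ((m + U_(i))%MM \in msupp p)) => hm'; last first.
  by move: hm'; rewrite mcoeff_msupp negbK => /eqP ->; rewrite mul0rn eqxx.
move=> _; have := msize_mdeg_lt hm'; rewrite mdegD.
suff -> : mdeg U_(i)%MM = 1%N by rewrite addn1.
by rewrite mdegE (bigD1 i) //= mnm1E eqxx big1 ?addn0 // => j; rewrite mnm1E eq_sym => /negbTE ->.
Qed.

Lemma ex_minP (P : nat -> Prop) n : P n -> exists k, P k /\ forall j, (j < k)%N -> ~ P j.
Proof.
elim: n {-2}n (leqnn n) => [|n IH] k hk Pk.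
  by exists k; split => // j; rewrite (leqn0 _) in hk; move/eqP: hk => ->.
case: (classic (exists j, (j < k)%N /\ P j)) => [[j [jk Pj]]|hn].
  by apply: (IH j) => //; rewrite -ltnS; exact: (leq_trans jk).
by exists k; split => // j jk Pj; apply: hn; exists j.
Qed.

Definition pb (P : Prop) : bool := if excluded_middle_informative P then true else false.
Lemma pbP (P : Prop) : reflect P (pb P).
Proof. by rewrite /pb; case: excluded_middle_informative => h; constructor. Qed.

Section Main.
Variables (L : fieldType) (d : L -> L) (K : pred L).
Hypothesis hd : derivation d.
Hypothesis hK : diff_subfield d K.

Lemma dsf_div : GRing.divring_closed K.
Proof. case: hK => K1 KB KM KV _; split => // x y xK yK; apply: KM => //; exact: KV. Qed.
Local Notation Kc := (Kp dsf_div).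
Lemma KcE x : (x \in Kc) = (x \in K). Proof. by []. Qed.
Lemma Kdd x : x \in K -> d x \in K. Proof. by case: hK => _ _ _ _; apply. Qed.
Lemma coeffsP n (p : {mpoly L[n]}) : coeffs_in K p <-> p \is a mpolyOver _ Kc.
Proof. by split => [h|/mpolyOverP h m]; [apply/mpolyOverP => m; exact: h | exact: h]. Qed.

Lemma mderiv_over n (p : {mpoly L[n]}) i : p \is a mpolyOver _ Kc -> p^`M(i) \is a mpolyOver _ Kc.
Proof. by move=> /mpolyOverP h; apply/mpolyOverP => m; rewrite mcoeff_deriv rpredMn. Qed.

Lemma dcoef_over n (p : {mpoly L[n]}) : p \is a mpolyOver _ Kc -> dcoef d p \is a mpolyOver _ Kc.
Proof. by move=> /mpolyOverP h; apply/mpolyOverP => m; rewrite dcoef_coef //; apply: Kdd; apply: h. Qed.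

Section Fixed.
Variables (a : L) (n : nat).
Local Notation v := (fun i : 'I_n.+1 => iter i d a).

Definition Ep (x : L) : Prop := exists f g : {mpoly L[n.+1]},
  [/\ f \is a mpolyOver _ Kc, g \is a mpolyOver _ Kc, g.@[v] != 0 & x = f.@[v] / g.@[v]].

Lemma Ep_poly f : f \is a mpolyOver _ Kc -> Ep f.@[v].
Proof. by move=> hf; exists f, 1; split; rewrite ?rpred1 ?meval1 ?oner_neq0 ?divr1. Qed.

Lemma Ep0 : Ep 0. Proof. by have := Ep_poly (rpred0 _); rewrite meval0. Qed.
Lemma Ep1 : Ep 1. Proof. by have := Ep_poly (rpred1 _); rewrite meval1. Qed.

Lemma Ep_B x y : Ep x -> Ep y -> Ep (x - y).
Proof.
move=> [f1 [g1 [hf1 hg1 g10 ->]]] [f2 [g2 [hf2 hg2 g20 ->]]].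
exists (f1 * g2 - f2 * g1), (g1 * g2); split.
- by rewrite rpredB ?rpredM.
- by rewrite rpredM.
- by rewrite mevalM mulf_neq0.
rewrite mevalB !mevalM; field; exact/andP.
Qed.

Lemma Ep_N x : Ep x -> Ep (- x).
Proof. by move=> h; have := Ep_B Ep0 h; rewrite sub0r. Qed.
Lemma Ep_D x y : Ep x -> Ep y -> Ep (x + y).
Proof. by move=> hx hy; rewrite -[y]opprK; apply: Ep_B => //; apply: Ep_N. Qed.

Lemma Ep_M x y : Ep x -> Ep y -> Ep (x * y).
Proof.
move=> [f1 [g1 [hf1 hg1 g10 ->]]] [f2 [g2 [hf2 hg2 g20 ->]]].
exists (f1 * f2), (g1 * g2); split.
- by rewrite rpredM.
- by rewrite rpredM.
- by rewrite mevalM mulf_neq0.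
rewrite !mevalM; field; exact/andP.
Qed.

Lemma Ep_V x : Ep x -> Ep (x^-1).
Proof.
move=> [f [g [hf hg g0 ->]]].
case: (eqVneq f.@[v] 0) => [->|f0]; first by rewrite mul0r invr0; exact: Ep0.
exists g, f; split => //; rewrite invfM invrK mulrC //.
Qed.

Lemma Ep_sum (I : Type) (r : seq I) (P : pred I) (F : I -> L) :
  (forall i, P i -> Ep (F i)) -> Ep (\sum_(i <- r | P i) F i).
Proof. by move=> h; elim/big_ind: _ => //; [exact: Ep0 | exact: Ep_D]. Qed.

Lemma Ep_K c : c \in K -> Ep c.
Proof. by move=> hc; have := Ep_poly (_ : c%:MP \is a mpolyOver _ Kc); rewrite mevalC; apply; rewrite mpolyOverC. Qed.

Lemma Ep_v i : Ep (v i).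
Proof.
have := Ep_poly (mpolyOverX Kc U_(i)%MM); rewrite mevalX.
rewrite (bigD1 i) //= mnm1E eqxx expr1 big1 ?mulr1 // => j; rewrite mnm1E eq_sym => /negbTE ->.
by rewrite expr0.
Qed.

Hypothesis dlast : Ep (iter n.+1 d a).

Lemma Ep_dv i : Ep (d (v i)).
Proof.
have -> : d (v i) = iter i.+1 d a by [].
case: (ltnP i n) => h.
  have := Ep_v (Ordinal (h : (i.+1 < n.+1)%N)); by [].
have -> : i.+1 = n.+1 by apply/eqP; rewrite eqSS eqn_leq h -ltnS ltn_ord.
exact: dlast.
Qed.

Lemma Ep_dpoly f : f \is a mpolyOver _ Kc -> Ep (d f.@[v]).
Proof.
move=> hf; rewrite (deriv_meval hd); apply: Ep_D; first by apply: Ep_poly; apply: dcoef_over.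
apply: Ep_sum => i _; apply: Ep_M; last exact: Ep_dv.
by apply: Ep_poly; apply: mderiv_over.
Qed.

Lemma Ep_d x : Ep x -> Ep (d x).
Proof.
move=> [f [g [hf hg g0 ->]]].
rewrite (dM hd) (dV hd g0); apply: Ep_D; apply: Ep_M.
- exact: Ep_dpoly.
- by apply: Ep_V; apply: Ep_poly.
- exact: Ep_poly.
apply: Ep_M; first by apply: Ep_N; apply: Ep_dpoly.
by apply: Ep_V; rewrite expr2; apply: Ep_M; apply: Ep_poly.
Qed.


Lemma common_den (s : seq L) : (forall x, x \in s -> Ep x) ->
  exists G : {mpoly L[n.+1]}, exists Hs : seq {mpoly L[n.+1]},
  [/\ G \is a mpolyOver _ Kc, all (fun h => h \is a mpolyOver _ Kc) Hs, G.@[v] != 0,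
      size Hs = size s & forall j, (j < size s)%N -> s`_j = (Hs`_j).@[v] / G.@[v]].
Proof.
elim: s => [|x s IH] hs.
  exists 1, [::]; split => //; first exact: rpred1.
  by rewrite meval1 oner_neq0.
have [f [g [hf hg g0 ->]]] := hs x (mem_head _ _).
have [G [Hs [hG hHs G0 sz hsj]]] : exists G : {mpoly L[n.+1]}, exists Hs : seq {mpoly L[n.+1]},
  [/\ G \is a mpolyOver _ Kc, all (fun h => h \is a mpolyOver _ Kc) Hs, G.@[v] != 0,
      size Hs = size s & forall j, (j < size s)%N -> s`_j = (Hs`_j).@[v] / G.@[v]].
  by apply: IH => y hy; apply: hs; rewrite in_cons hy orbT.
exists (g * G), (f * G :: [seq h * g | h <- Hs]); split.
- by rewrite rpredM.
- rewrite /= rpredM //=; apply/allP => h /mapP [h' h'in ->]; rewrite rpredM //.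
  by move/allP: hHs; apply.
- by rewrite mevalM mulf_neq0.
- by rewrite /= size_map sz.
case => [|j] /= hj; first by rewrite !mevalM; field; apply/andP.
rewrite (nth_map 0) ?sz // hsj // !mevalM; field; exact/andP.
Qed.

Local Notation wt := (fun i : 'I_n.+2 => if unlift ord0 i is Some j then v j else 1).

Definition hom (e : nat) (p : {mpoly L[n.+1]}) : {mpoly L[n.+2]} :=
  remap (fun m => consm (e - mdeg m) m) p.

Lemma hom_homog e (p : {mpoly L[n.+1]}) : (msize p <= e.+1)%N -> hom e p \is e.-homog.
Proof.
move=> hp; apply: remap_homog => m hm; rewrite mdeg_consm subnK //.
by rewrite -ltnS; apply: leq_trans hp; apply: msize_mdeg_lt.
Qed.

Lemma hom_eval e (p : {mpoly L[n.+1]}) : (hom e p).@[wt] = p.@[v].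
Proof.
apply: remap_eval => m _; rewrite eval_consm unlift_none expr1n mul1r.
by apply: meval_eq => j; rewrite liftK.
Qed.

Lemma hom_inj e (p : {mpoly L[n.+1]}) : {in msupp p &, injective (fun m => consm (e - mdeg m) m)}.
Proof. by move=> m1 m2 _ _ /consm_inj. Qed.

Lemma hom_ne0 e (p : {mpoly L[n.+1]}) : p != 0 -> hom e p != 0.
Proof. by move=> p0; apply: remap_ne0 => //; exact: hom_inj. Qed.

Lemma hom_over e (p : {mpoly L[n.+1]}) : p \is a mpolyOver _ Kc -> hom e p \is a mpolyOver _ Kc.
Proof.
move=> /mpolyOverP hp; apply/mpolyOverP; apply: remap_coef_in => //.
- exact: rpred0.
- by move=> x y hx hy; apply: rpredD.
Qed.

Lemma homog_scale N (P : {mpoly L[N]}) D (g : L) (y : 'I_N -> L) :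
  P \is D.-homog -> P.@[fun i => g * y i] = g ^+ D * P.@[y].
Proof.
move=> /dhomogP hP; rewrite !mevalE mulr_sumr big_seq [RHS]big_seq.
apply: eq_bigr => m hm; rewrite mulrCA; congr (_ * _).
have h : forall r : seq 'I_N, \prod_(i <- r) (g * y i) ^+ m i =
    g ^+ (\sum_(i <- r) m i) * \prod_(i <- r) y i ^+ m i.
  elim => [|i r IH]; first by rewrite !big_nil expr0 mulr1.
  by rewrite !big_cons exprMn IH exprD; ring.
by rewrite h -mdegE (hP m hm).
Qed.

Lemma sum_ge_mem (s : seq {mpoly L[n.+1]}) (f : {mpoly L[n.+1]} -> nat) x :
  x \in s -> (f x <= \sum_(y <- s) f y)%N.
Proof.
elim: s => [|z s IH] //; rewrite in_cons big_cons => /orP [/eqP ->|hx].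
  exact: leq_addr.
by apply: leq_trans (IH hx) _; exact: leq_addl.
Qed.

Lemma trdeg_E (q : {mpoly L[n.+1]}) r : q \is a mpolyOver _ Kc -> q != 0 -> q.@[v] = 0 ->
  (n <= r)%N -> trdeg_le K (fun x => pb (Ep x)) r.
Proof.
move=> hq q0 qv nr s sE sind.
rewrite leqNgt; apply/negP => rs.
have ns : (n < size s)%N by apply: leq_ltn_trans rs.
have hE : forall x, x \in s -> Ep x by move=> x hx; apply/pbP; exact: (allP sE x hx).
have [G [Hs [hG hHs G0 sz hsj]]] := common_den hE.
pose c := (msize G + \sum_(h <- Hs) msize h)%N.
pose GH0 := [tuple hom c (nth 0 (G :: Hs) i) | i < (size s).+1].
pose qh := hom (msize q) q.
have qhh : qh \is (msize q).-homog by apply: hom_homog.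
have qh0 : qh != 0 by apply: hom_ne0.
have qhv : qh.@[wt] = 0 by rewrite hom_eval.
have hqh : qh \is a mpolyOver _ Kc by apply: hom_over.
have c0 : (0 < c)%N.
  apply: (leq_trans _ (leq_addr _ _)); rewrite lt0n.
  apply/negP => /eqP /eqP; rewrite (@mmeasure_poly_eq0 _ _ mdeg) => /eqP G00.
  by move: G0; rewrite G00 meval0 eqxx.
have nthP : forall i : 'I_(size s).+1, nth 0 (G :: Hs) i \is a mpolyOver _ Kc.
  move=> [m hm]; case: m hm => [|i] hi //=.
  case: (ltnP i (size Hs)) => hi'; last by rewrite nth_default ?rpred0.
  by move/allP: hHs; apply; rewrite mem_nth.
have GHh : forall i, tnth GH0 i \is c.-homog.
  move=> i; rewrite tnth_mktuple; apply: hom_homog; apply: leqW.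
  case: i => [[|i] hi] /=; first exact: leq_addr.
  case: (ltnP i (size Hs)) => hi'; last by rewrite nth_default // msize0.
  by apply: leq_trans (leq_addl _ _); apply: sum_ge_mem; rewrite mem_nth.
have GHo : forall i, tnth GH0 i \is a mpolyOver _ Kc.
  by move=> i; rewrite tnth_mktuple; apply: hom_over.
pose F := KT dsf_div.
pose q' := pullK (dsf_div) qh.
pose GH' := [tuple pullK (dsf_div) (tnth GH0 i) | i < (size s).+1].
have q'E : map_mpoly val q' = qh by apply: pullKK; move/mpolyOverP: hqh.
have GH'E : forall i, map_mpoly val (tnth GH' i) = tnth GH0 i.
  by move=> i; rewrite tnth_mktuple; apply: pullKK; move/mpolyOverP: (GHo i).
have q'0 : q' != 0 by rewrite -(map_val_eq0 q') q'E.
have q'h : q' \is (msize q).-homog by apply: map_val_homog; rewrite q'E.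
have GH'h : forall i, tnth GH' i \is c.-homog by move=> i; apply: map_val_homog; rewrite GH'E.
have [D [P' [R' [P'0 P'h P'E]]]] := counting q'0 q'h GH'h c0 ns.
pose kv := (val : {rmorphism F -> L}).
pose P := map_mpoly kv P'.
have PE : map_mpoly kv (P' \mPo GH') = P \mPo GH0.
  rewrite map_mpoly_comp; last exact: val_inj.
  congr (_ \mPo _); apply: eq_from_tnth => i; rewrite tnth_map; exact: GH'E.
have hev : P.@[fun i => (tnth GH0 i).@[wt]] = 0.
  rewrite -comp_mpoly_meval -PE P'E rmorphM mevalM.
  rewrite [X in X.@[_] * _](_ : _ = qh); last exact: q'E.
  by rewrite qhv mul0r.
pose y := fun i : 'I_(size s).+1 => if unlift ord0 i is Some j then s`_j else 1.
have hy : forall i, (tnth GH0 i).@[wt] = G.@[v] * y i.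
  move=> i; rewrite tnth_mktuple hom_eval /y.
  case: (unliftP ord0 i) => [j ->|->] /=; last by rewrite mulr1.
  rewrite add0n hsj ?ltn_ord //.
  field; exact: G0.
have Ph : P \is D.-homog.
  apply/dhomogP => m; rewrite mcoeff_msupp mcoeff_map_mpoly raddf_eq0; last exact: val_inj.
  by rewrite -mcoeff_msupp; move/dhomogP: P'h; apply.
have Py : P.@[y] = 0.
  move: hev; rewrite (meval_eq _ hy) (homog_scale _ _ Ph).
  by move/eqP; rewrite mulf_eq0 expf_eq0 (negbTE G0) andbF /= => /eqP.
pose Pd := remap (@tailm (size s)) P.
have injt : {in msupp P &, injective (@tailm (size s))}.
  move=> m1 m2 h1 h2; apply: tailm_inj_deg.
  by move/dhomogP: Ph => hh; rewrite (hh _ h1) (hh _ h2).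
have P0 : P != 0 by rewrite map_val_eq0.
have Pd0 : Pd != 0 by apply: remap_ne0.
apply: (negP Pd0); apply/eqP; apply: sind.
  move=> m; apply: remap_coef_in => //; first exact: (rpred0 Kc).
  - by move=> x z hx hz; rewrite -KcE rpredD.
  - by move=> m'; exact: map_val_coef.
apply: (etrans _ Py); apply: remap_eval => m _.
apply: (@etrans _ _ (('X_[tailm m]).@[fun j => y (lift ord0 j)])); last first.
  have y0 : y ord0 = 1 by rewrite /y unlift_none.
  exact: (@eval_tailm (size s) L m y y0).
by apply: meval_eq => j; rewrite /y liftK.
Qed.

End Fixed.

Lemma mpoly0_eval (q : {mpoly L[0]}) x : q != 0 -> q.@[x] != 0.
Proof.
move=> q0; have e := nvar0_mpolyC q; rewrite e mevalC.
by apply: contraNneq q0 => h; rewrite e h mpolyC0.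
Qed.

Lemma backward r : [pchar L] =i pred0 ->
  ~ (exists E : pred L,
        [/\ diff_subfield d E, {subset K <= E},
            (exists x, x \in E /\ x \notin K) & trdeg_le K E r]) ->
  r_diff_closed d K r.
Proof.
move=> hc noE p pK p0 a pa.
case: (boolP (a \in K)) => // aK; exfalso; apply: noE.
pose Dep j := exists q : {mpoly L[j]},
  [/\ q \is a mpolyOver _ Kc, q != 0 & q.@[fun i : 'I_j => iter i d a] = 0].
have Dr : Dep r.+1 by exists p; split => //; apply/coeffsP.
have [k [Dk kmin]] := ex_minP Dr.
case: k Dk kmin => [|n] Dk kmin.
  case: Dk => q [_ q0 qv].
  by move: (mpoly0_eval (fun i : 'I_0 => iter i d a) q0); rewrite qv eqxx.
have nr : (n <= r)%N.
  by rewrite leqNgt; apply/negP => rn; apply: (kmin r.+1) => //.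
pose v := fun i : 'I_n.+1 => iter i d a.
pose Dq s := exists q : {mpoly L[n.+1]},
  [/\ q \is a mpolyOver _ Kc, q != 0, q.@[v] = 0 & msize q = s].
case: Dk => q1 [h1 h2 h3].
have Dq0 : Dq (msize q1) by exists q1.
have [s0 [[q [qo q0 qv qs]] smin]] := ex_minP Dq0.
have q'o : q^`M(ord_max) \is a mpolyOver _ Kc by apply: mderiv_over.
have q'v0 : (q^`M(ord_max)).@[v] != 0.
  apply/negP => /eqP h'.
  case: (eqVneq (q^`M(ord_max)) 0) => hq'; last first.
    apply: (smin (msize q^`M(ord_max))); first by rewrite -qs; apply: msize_mderiv_lt.
    by exists (q^`M(ord_max)).
  have hlast : forall m, m \in msupp q -> m ord_max = 0%N.
    move=> m hm; case: (posnP (m ord_max)) => // hne; exfalso.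
    pose m0 := (m - U_(ord_max))%MM.
    have em : (m0 + U_(ord_max))%MM = m.
      apply/mnmP => i; rewrite mnmDE mnmBE mnm1E.
      by case: eqP => [<-|_] /=; lia.
    have := mcoeff_deriv ord_max m0 q; rewrite hq' mcoeff0 em => /esym /eqP.
    rewrite -mulr_natr mulf_eq0 => /orP [|].
      by move: hm; rewrite mcoeff_msupp => /negbTE ->.
    by move/pcharf0P: hc => ->.
  apply: (kmin n (ltnSn n)).
  pose qd := remap (@dropl n) q.
  have injd : {in msupp q &, injective (@dropl n)}.
    by move=> m1 m2 hm1 hm2; apply: dropl_inj; apply: hlast.
  exists qd; split.
  - apply/mpolyOverP; apply: remap_coef_in; first exact: (rpred0 Kc).
      by move=> x z hx hz; apply: rpredD.
    by move/mpolyOverP: qo.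
  - exact: remap_ne0.
  apply: (etrans _ qv); apply: remap_eval => m hm.
  exact: (@eval_dropl n L m v (hlast m hm)).
have dlast : Ep a n (iter n.+1 d a).
  have hdq := deriv_meval hd q v; rewrite qv (d0 hd) big_ord_recr /= in hdq.
  set A := (dcoef d q).@[v] in hdq.
  set S := \sum_(i < n) _ in hdq.
  set X := d (iter n d a) in hdq.
  set Q := (q^`M(ord_max)).@[v] in hdq q'v0.
  have e : Q * X = - (A + S).
    by apply: (addrI (A + S)); rewrite addrN -addrA; exact: (esym hdq).
  have -> : iter n.+1 d a = - (A + S) / Q.
    by rewrite -e mulrC mulKf.
  apply: Ep_M; last by apply: Ep_V; apply: Ep_poly.
  apply: Ep_N; apply: Ep_D; first by apply: Ep_poly; apply: dcoef_over.
  apply: Ep_sum => i _; apply: Ep_M; first by apply: Ep_poly; apply: mderiv_over.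
  have := Ep_v a (Ordinal (ltn_ord i : (i.+1 < n.+1)%N)); by [].
exists (fun x => pb (Ep a n x)); split.
- split.
  + by apply/pbP; apply: Ep1.
  + by move=> x y /pbP hx /pbP hy; apply/pbP; apply: Ep_B.
  + by move=> x y /pbP hx /pbP hy; apply/pbP; apply: Ep_M.
  + by move=> x /pbP hx; apply/pbP; apply: Ep_V.
  + by move=> x /pbP hx; apply/pbP; apply: Ep_d.
- by move=> x hx; apply/pbP; apply: Ep_K.
- by exists a; split => //; apply/pbP; have := Ep_v a (@ord0 n).
exact: (trdeg_E qo q0 qv nr).
Qed.
End Main.

Lemma forward (L : fieldType) (d : L -> L) (K : pred L) (r : nat) :
  r_diff_closed d K r ->
  ~ (exists E : pred L,
        [/\ diff_subfield d E, {subset K <= E},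
            (exists x, x \in E /\ x \notin K) & trdeg_le K E r]).
Proof.
move=> rdc [E [Ed KE [x [xE xK]] Etr]].
pose s := [seq iter i d x | i <- iota 0 r.+1].
have sE : all (mem E) s.
  apply/allP => y /mapP [i _ ->]; elim: i => [|i IH] //=.
  by case: Ed => _ _ _ _; apply.
have hsz : size s = r.+1 by rewrite size_map size_iota.
have nind : ~ alg_indep K s.
  by move=> hind; have := Etr s sE hind; rewrite hsz ltnn.
have [p [pK [pv p0]]] : exists p : {mpoly L[size s]},
    [/\ coeffs_in K p, p.@[fun i : 'I_(size s) => s`_i] = 0 & p != 0].
  apply: NNPP => hn; apply: nind => p pK pv.
  by apply/eqP; apply: negbNE; apply/negP => p0; apply: hn; exists p.
apply: (negP xK).
have h : forall N (e : N = r.+1) (p : {mpoly L[N]}), coeffs_in K p -> p != 0 ->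
    p.@[fun i : 'I_N => s`_i] = 0 -> x \in K.
  move=> N e; subst N => p' pK' p0' pv'; apply: (rdc p' pK' p0').
  rewrite -pv'; apply: meval_eq => i.
  by rewrite /s (nth_map 0%N) ?size_iota ?nth_iota.
exact: (h _ hsz p pK p0 pv).
Qed.

Unset Implicit Arguments.

Theorem mainTheorem16 (L : fieldType) (d : L -> L) (K : pred L) (r : nat) :
  [pchar L] =i pred0 ->
  derivation d ->
  diff_subfield d K ->
  r_diff_closed d K r <->
  ~ (exists E : pred L,
        [/\ diff_subfield d E, {subset K <= E},
            (exists x, x \in E /\ x \notin K) & trdeg_le K E r]).
Proof.
move=> hc hd hK; split; first exact: forward.
exact: backward.
Qed.
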